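(* Let $z\in\overline U$ and $Z_n=(z_1,\dots,z_n)\in\overline U^{\,n}$ (with all denominators below nonzero). Then \[ |B(Z_n,z)|\le\exp\Big(-\frac{1-|z|^2}{4}\sum_{j=1}^n(1-|z_j|)\Big),\qquad |B_k(Z_n,z)|\le 2\exp\Big(-\frac{1-|z|^2}{4}\sum_{j=1}^n(1-|z_j|)\Big) \] for each $k=1,\dots,n$.
   Context: $U$ is the open unit disc. For $Z_n=(z_1,\dots,z_n)$, $B(Z_n,z)=\prod_{j=1}^n\frac{z-z_j}{1-\overline{z_j}z}$ and $B_k(Z_n,z)=\prod_{1\le j\ne k\le n}\frac{z-z_j}{1-\overline{z_j}z}$. *)

(* Defs.v *)
From Stdlib Require Import Reals.
From Coquelicot Require Import Coquelicot.
Open Scope R_scope.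

Definition bfactor (w z : C) : C :=
  Cdiv (Cminus z w) (Cminus (RtoC 1) (Cmult (Cconj w) z)).

Fixpoint cprod (n : nat) (f : nat -> C) : C :=
  match n with
  | O => RtoC 1
  | S m => Cmult (cprod m f) (f m)
  end.

Fixpoint rsum (n : nat) (f : nat -> R) : R :=
  match n with
  | O => 0
  | S m => rsum m f + f m
  end.

(* Z_n = (Zs 0, ..., Zs (n-1)) (0-based indexing). *)
Definition Blaschke (n : nat) (Zs : nat -> C) (z : C) : C :=
  cprod n (fun j => bfactor (Zs j) z).

Definition Blaschke_k (n : nat) (Zs : nat -> C) (k : nat) (z : C) : C :=
  cprod n (fun j => if Nat.eqb j k then RtoC 1 else bfactor (Zs j) z).

(* Main.v *)
Require Import Defs.
From Stdlib Require Import Reals Lra Psatz.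
From Coquelicot Require Import Coquelicot.
Open Scope R_scope.

Lemma ident (w z : C) :
  Cmod (Cminus (RtoC 1) (Cmult (Cconj w) z)) ^ 2 - Cmod (Cminus z w) ^ 2
  = (1 - Cmod w ^ 2) * (1 - Cmod z ^ 2).
Proof.
  rewrite !Cmod2_alt. destruct w as [a b], z as [c d].
  unfold Cminus, Cmult, Cconj, Cplus, Copp, RtoC; simpl. ring.
Qed.

Lemma den_le (w z : C) :
  Cmod (Cminus (RtoC 1) (Cmult (Cconj w) z)) <= 1 + Cmod w * Cmod z.
Proof.
  unfold Cminus. eapply Rle_trans. apply Cmod_triangle.
  rewrite Cmod_opp, Cmod_mult, Cmod_conj, Cmod_1. lra.
Qed.

Lemma bfactor_bound (w z : C) :
  Cmod z <= 1 -> Cmod w <= 1 ->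
  Cminus (RtoC 1) (Cmult (Cconj w) z) <> RtoC 0 ->
  Cmod (bfactor w z) <= exp (- ((1 - Cmod z ^ 2) / 4) * (1 - Cmod w)).
Proof.
  intros hz hw hd. unfold bfactor. rewrite Cmod_div; auto.
  set (D := Cmod (Cminus (RtoC 1) (Cmult (Cconj w) z))).
  set (N := Cmod (Cminus z w)).
  pose proof (ident w z) as I. fold D N in I.
  pose proof (den_le w z) as DL. fold D in DL.
  assert (Dp : 0 < D) by (apply Cmod_gt_0; auto).
  assert (N0 : 0 <= N) by apply Cmod_ge_0.
  pose proof (Cmod_ge_0 w). pose proof (Cmod_ge_0 z).
  set (r := Cmod w) in *. set (s := Cmod z) in *.
  set (x := (1 - s ^ 2) * (1 - r)).
  assert (x0 : 0 <= x) by (unfold x; apply Rmult_le_pos; nra).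
  assert (Hsq : (N / D) ^ 2 <= 1 - x / 2).
  { assert (D <= 1 + r) by nra. assert (D ^ 2 <= 2 * (1 + r)) by nra.
    assert (N ^ 2 <= D ^ 2 * (1 - x / 2)).
    { assert (0 <= (2 * (1 + r) - D ^ 2) * x) by (apply Rmult_le_pos; lra). unfold x in *. nra. }
    replace ((N / D) ^ 2) with (N ^ 2 / D ^ 2) by (field; lra).
    apply Rmult_le_reg_r with (D ^ 2). nra.
    unfold Rdiv. rewrite Rmult_assoc, Rinv_l. nra. nra. }
  pose proof (exp_ineq1_le (- x / 2)).
  assert (E : exp (- x / 2) = exp (- ((1 - s ^ 2) / 4) * (1 - r)) ^ 2).
  { assert (P2 : forall y, exp y ^ 2 = exp (y + y)) by (intro y; rewrite exp_plus; ring). rewrite P2. f_equal. unfold x. field. }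
  assert (0 <= N / D) by (apply Rdiv_le_0_compat; lra).
  pose proof (exp_pos (- ((1 - s ^ 2) / 4) * (1 - r))).
  destruct (Rle_lt_dec (N / D) (exp (- ((1 - s ^ 2) / 4) * (1 - r)))); auto.
  exfalso. nra.
Qed.

Lemma cprod_bound n f a : (forall j, (j < n)%nat -> Cmod (f j) <= exp (a j)) ->
  Cmod (cprod n f) <= exp (rsum n a).
Proof.
  induction n; intros H; simpl.
  - rewrite Cmod_1, exp_0. lra.
  - rewrite Cmod_mult, exp_plus. apply Rmult_le_compat.
    apply Cmod_ge_0. apply Cmod_ge_0. apply IHn. intros; apply H; lia.
    apply H; lia.
Qed.

Lemma rsum_ext n f g : (forall j, (j < n)%nat -> f j = g j) -> rsum n f = rsum n g.
Proof. induction n; intros H; simpl; auto. rewrite IHn, H; auto. Qed.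

Lemma rsum_scal n k g : rsum n (fun j => k * g j) = k * rsum n g.
Proof. induction n; simpl; [ring|rewrite IHn; ring]. Qed.

Lemma rsum_plus n f g : rsum n (fun j => f j + g j) = rsum n f + rsum n g.
Proof. induction n; simpl; [ring|rewrite IHn; ring]. Qed.

Lemma rsum_ind n k v : (k < n)%nat -> rsum n (fun j => if Nat.eqb j k then v else 0) = v.
Proof.
  induction n; intros H; simpl. lia.
  destruct (Nat.eqb n k) eqn:E.
  - apply Nat.eqb_eq in E; subst.
    rewrite (rsum_ext _ _ (fun _ => 0)). clear. induction k; simpl; lra.
    intros j Hj. destruct (Nat.eqb j k) eqn:E'; auto. apply Nat.eqb_eq in E'; lia.
  - apply Nat.eqb_neq in E. rewrite IHn; [lra|lia].
Qed.

Theorem proposition2p2 (n : nat) (Zs : nat -> C) (z : C)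
  (hz : Cmod z <= 1)
  (hZ : forall j, (j < n)%nat -> Cmod (Zs j) <= 1)
  (hden : forall j, (j < n)%nat ->
          Cminus (RtoC 1) (Cmult (Cconj (Zs j)) z) <> RtoC 0) :
  let E := exp (- ((1 - Cmod z ^ 2) / 4) * rsum n (fun j => 1 - Cmod (Zs j))) in
  Cmod (Blaschke n Zs z) <= E /\
  (forall k, (k < n)%nat -> Cmod (Blaschke_k n Zs k z) <= 2 * E).
Proof.
  intros E. set (c := (1 - Cmod z ^ 2) / 4).
  pose proof (Cmod_ge_0 z).
  assert (c0 : 0 <= c) by (unfold c; nra).
  assert (c1 : c <= 1/4) by (unfold c; nra).
  split.
  - unfold E, Blaschke. rewrite <- rsum_scal. apply cprod_bound.
    intros j Hj. apply bfactor_bound; auto.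
  - intros k Hk. unfold Blaschke_k.
    set (t := c * (1 - Cmod (Zs k))).
    assert (t0 : 0 <= t) by (unfold t; pose proof (hZ k Hk); apply Rmult_le_pos; lra).
    assert (t1 : t <= 1/4) by (assert (t <= c * 1) by (unfold t; apply Rmult_le_compat_l; pose proof (Cmod_ge_0 (Zs k)); lra); lra).
    eapply Rle_trans. apply (cprod_bound _ _
      (fun j => - c * (1 - Cmod (Zs j)) + (if Nat.eqb j k then t else 0))).
    + intros j Hj. destruct (Nat.eqb j k) eqn:Ej.
      * apply Nat.eqb_eq in Ej; subst. rewrite Cmod_1.
        replace (- c * (1 - Cmod (Zs k)) + t) with 0 by (unfold t; ring).
        rewrite exp_0; lra.
      * rewrite Rplus_0_r. apply bfactor_bound; auto.
    + rewrite rsum_plus, rsum_ind, rsum_scal, exp_plus; auto. fold c. fold E.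
      pose proof (exp_ineq1_le (- t)).
      assert (exp t * exp (- t) = 1) by (rewrite <- exp_plus, Rplus_opp_r, exp_0; auto).
      assert (exp t <= 2) by nra.
      unfold E. pose proof (exp_pos (- c * rsum n (fun j => 1 - Cmod (Zs j)))). fold c. nra.
Qed.
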